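(* Let $k$, $d$ and $n$ be positive integers such that $k$ is even, $d \ge 2$, and $n \ge \max\{k, \frac{d+1}{8}(k^2-2sk+4s-4) + 1\}$, where $s \in \{0,1\}$ with $s \equiv \frac{k-2}{2} \pmod 2$. Then, for any function $f:[n] \rightarrow \{-1,1\}$ such that $|f([n])| \le \min \{n-k,\frac{d-1}{d+1}n\}$, there is a zero-sum $(d,k)$-block in $[n]$, i.e. a $(d,k)$-block $A\subseteq[n]$ with $f(A)=0$.
   Context: $[n]=\{1,\dots,n\}$; $f(Y)=\sum_{y\in Y}f(y)$. A $(d,k)$-block in $[n]$ is a set $\{a_1,\dots,a_k\}\subseteq[n]$ of integers with $a_1<a_2<\dots<a_k$ and $a_{i+1}-a_i\le d$ for all $1\le i\le k-1$. *)

(* Defs.v *)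
From mathcomp Require Import all_boot all_order all_algebra.
Set Implicit Arguments. Unset Strict Implicit. Unset Printing Implicit Defensive.
Import Order.TTheory GRing.Theory Num.Theory.

(* A (d,k)-block in [n] = {1,..,n}, represented by the increasing list
   [:: a_1; ...; a_k] of its elements: a_1 < ... < a_k, 1 <= a_i <= n,
   and a_{i+1} - a_i <= d for consecutive elements. *)
Definition dk_block (n d k : nat) (A : seq nat) : bool :=
  [&& size A == k,
      all (fun a => 0 < a <= n) A &
      sorted (fun a b => (a < b) && (b <= a + d)) A].

Definition fsum (f : nat -> int) (A : seq nat) : int := (\sum_(a <- A) f a)%R.

Definition fsum_n (f : nat -> int) (n : nat) : int := (\sum_(1 <= i < n.+1) f i)%R.

(* Main.v *)
Require Import Defs.
From mathcomp Require Import all_boot all_order all_algebra zify ring lra.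
From Stdlib Require Import Classical_Prop.
Import Order.TTheory GRing.Theory Num.Theory.


Implicit Types (P Q : nat -> bool) (F G : nat -> nat).
Definition psum a b (P : nat -> bool) (F : nat -> nat) := \sum_(a <= i < b | P i) F i.

Lemma psum_mkcond a b P F : psum a b P F = \sum_(a <= i < b) (if P i then F i else 0).
Proof. by rewrite /psum big_mkcond. Qed.

Lemma psum_add a b P F x : ~~ P x -> a <= x < b ->
  psum a b (fun i => P i || (i == x)) F = psum a b P F + F x.
Proof.
move=> Px xab; rewrite !psum_mkcond.
rewrite (eq_bigr (fun i => (if P i then F i else 0) + (if i == x then F i else 0))); last first.
  move=> i _; case: (boolP (i == x)) => [/eqP -> | _]; first by rewrite (negbTE Px).
  by rewrite orbF addn0.
rewrite big_split /=; congr (_ + _).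
by rewrite -big_mkcond big_nat1_eq xab.
Qed.

Lemma psum_rem a b P F M : P M -> a <= M < b ->
  psum a b (fun i => P i && (i != M)) F + F M = psum a b P F.
Proof.
move=> PM Mab; rewrite -psum_add ?eqxx ?andbF //.
apply: eq_bigl => i /=; case: (eqVneq i M) => [->|_]; by rewrite ?PM ?andbT ?orbF ?orbT.
Qed.

Lemma psum_mono a b P Q F : (forall i, P i -> Q i) -> psum a b P F <= psum a b Q F.
Proof.
move=> H; rewrite !psum_mkcond; apply: leq_sum => i _.
by case: (boolP (P i)) => // /H ->.
Qed.

Lemma psum_eq a b P Q F : (forall i, a <= i < b -> P i = Q i) -> psum a b P F = psum a b Q F.
Proof.
move=> H; rewrite /psum big_nat_cond [RHS]big_nat_cond; apply: eq_bigl => i.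
by case: (boolP (a <= i < b)) => // /H ->.
Qed.

Lemma psum_eqF a b P F G : (forall i, a <= i < b -> P i -> F i = G i) -> psum a b P F = psum a b P G.
Proof.
move=> H; rewrite /psum big_nat_cond [RHS]big_nat_cond; apply: eq_bigr => i /andP[].
exact: H.
Qed.

Lemma psum_le1 a b P F : (forall i, F i <= 1) -> psum a b P F <= b - a.
Proof.
move=> H; rewrite psum_mkcond; apply: leq_trans (_ : \sum_(a <= i < b) 1 <= _).
  apply: leq_sum => i _; case: (P i) => //.
by rewrite sum_nat_const_nat muln1.
Qed.

Lemma psum_cat a m b P F : a <= m <= b -> psum a b P F = psum a m P F + psum m b P F.
Proof. by move=> /andP[h1 h2]; rewrite /psum (big_cat_nat h1 h2). Qed.

Lemma psum_zero a b P F : (forall i, a <= i < b -> P i -> F i = 0) -> psum a b P F = 0.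
Proof.
move=> H; rewrite /psum big_nat_cond; apply: big1 => i /andP[].
exact: H.
Qed.

Lemma psum_split a b P F G : psum a b P (fun i => F i + G i) = psum a b P F + psum a b P G.
Proof. by rewrite /psum big_split. Qed.

Lemma psum_nat1 a P F : psum a a.+1 P F = if P a then F a else 0.
Proof. by rewrite psum_mkcond big_nat1. Qed.

Lemma psum_recr a b P F : a <= b -> psum a b.+1 P F = psum a b P F + (if P b then F b else 0).
Proof. by move=> ab; rewrite !psum_mkcond big_nat_recr. Qed.

Section Blocks.
Variables n d k : nat.

Definition gapok (P : nat -> bool) := forall i j, P i -> P j -> i < j ->
  (forall l, i < l < j -> ~~ P l) -> j <= i + d.

Definition pblk P := [/\ forall i, P i -> 0 < i <= n,
   psum 1 n.+1 P (fun _ => 1) = k & gapok P].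

Definition rel_d := fun a b => (a < b) && (b <= a + d).

Lemma path_filter P : gapok P -> forall m a x, P x -> x < a ->
  (forall l, x < l < a -> ~~ P l) -> path rel_d x (filter P (iota a m)).
Proof.
move=> G; elim=> [|m IH] a x Px xa Hl //=.
case: (boolP (P a)) => Pa /=.
  rewrite /rel_d xa (G x a) //=; apply: IH => //; move=> l; lia.
apply: IH => //; first lia.
move=> l /andP[h1 h2]; case: (ltngtP l a) => h3; [apply: Hl; lia|lia|by rewrite h3].
Qed.

Lemma sorted_filter P : gapok P -> forall m a, sorted rel_d (filter P (iota a m)).
Proof.
move=> G; elim=> [|m IH] a //=.
case: (boolP (P a)) => Pa //=.
apply: path_filter => // l; lia.
Qed.

Lemma pblock_dk P : pblk P -> dk_block n d k (filter P (iota 1 n)).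
Proof.
case=> R C G; apply/and3P; split.
- rewrite size_filter -sum1_count -C /psum /index_iota subn1 /=.
  by rewrite -big_filter.
- apply/allP => i; rewrite mem_filter => /andP[/R] //.
- exact: sorted_filter.
Qed.


Lemma gapok_remmax P M : gapok P -> P M -> (forall i, P i -> i <= M) ->
  gapok (fun i => P i && (i != M)).
Proof.
move=> G PM HM i j /andP[Pi iM] /andP[Pj jM] ij Hl.
apply: G => // l /andP[h1 h2]; have := Hl l; rewrite h1 h2 /= => /(_ isT).
have : l != M by apply/eqP => E; have := HM _ Pj; lia.
by move=> ->; rewrite andbT.
Qed.

Lemma gapok_add P x : gapok P -> ~~ P x ->
  (forall a, P a -> a < x -> (forall l, a < l < x -> ~~ P l) -> x <= a + d) ->
  (forall b, P b -> x < b -> (forall l, x < l < b -> ~~ P l) -> b <= x + d) ->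
  gapok (fun i => P i || (i == x)).
Proof.
move=> G Px H1 H2 i j Pi Pj ij Hl.
have Hl' : forall l, i < l < j -> ~~ P l.
  by move=> l hl; have := Hl l hl; rewrite negb_or => /andP[].
case: (eqVneq i x) => [Ei|ix].
  subst i; case: (eqVneq j x) Pj => [jx|jx]; first by move: ij; rewrite jx ltnn.
  by rewrite orbF => Pj; apply: H2.
move: Pi; rewrite (negbTE ix) orbF => Pi.
case: (eqVneq j x) Pj => [Ej|jx]; first by subst j => _; apply: H1.
by rewrite orbF => Pj; apply: G.
Qed.

Lemma adj_up P M : P M -> forall t y, y + t.+1 = M -> ~~ P y ->
  exists x, [/\ ~~ P x, P x.+1 & y <= x < M].
Proof.
move=> PM; elim=> [|t IH] y hy Py.
  exists y; split => //; [by rewrite -addn1 hy | lia].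
case: (boolP (P y.+1)) => Py1; first by exists y; split => //; lia.
have [|x [h1 h2 h3]] := IH y.+1 _ Py1; first lia.
by exists x; split => //; lia.
Qed.

Lemma adj_down P p : P p -> forall t y, p + t.+1 = y -> ~~ P y ->
  exists x, [/\ ~~ P x, P x.-1 & p < x <= y].
Proof.
move=> Pp; elim=> [|t IH] y hy Py.
  exists y; split => //; [by rewrite -hy addn1 | lia].
case: (boolP (P y.-1)) => Py1; first by exists y; split => //; lia.
have [|x [h1 h2 h3]] := IH y.-1 _ Py1; first lia.
by exists x; split => //; lia.
Qed.

Lemma exists_in P a b : 0 < psum a b P (fun _ => 1) -> exists i, [/\ P i, a <= i & i < b].
Proof.
move=> H; case: (boolP (has P (index_iota a b))) => [/hasP [i]|/hasP Hn].
  by rewrite mem_index_iota => /andP[h1 h2] Pi; exists i.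
exfalso; move: H; rewrite psum_zero // => i hi Pi; case: Hn; exists i => //.
by rewrite mem_index_iota.
Qed.

Lemma psum_full a b P : (forall i, a <= i < b -> P i) -> psum a b P (fun _ => 1) = b - a.
Proof.
move=> H; rewrite (@psum_eq a b P predT); last by move=> i /H ->.
by rewrite psum_mkcond sum_nat_const_nat muln1.
Qed.

Lemma pad P c : 0 < d -> (forall i, P i -> 0 < i <= n) -> gapok P ->
  psum 1 n.+1 P (fun _ => 1) = c -> 0 < c -> c <= k -> k <= n ->
  exists Q, pblk Q /\ (forall i, P i -> Q i).
Proof.
move=> d0 R G Cc c0 ck kn.
have [t ht] : exists t, c + t = k by exists (k - c); lia.
elim: t P c ht R G Cc c0 ck => [|t IH] P c ht R G Cc c0 ck.
  by exists P; split => //; split => //; rewrite Cc -ht addn0.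
have [p [Pp p1 pn]] := @exists_in P 1 n.+1 ltac:(lia).
have [y [Py y1 yn]] : exists y, [/\ ~~ P y, 1 <= y & y < n.+1].
  case: (boolP (has (fun i => ~~ P i) (index_iota 1 n.+1))) => [/hasP [i]|/hasP Hn].
    by rewrite mem_index_iota => /andP[h1 h2] Pi; exists i.
  exfalso; have := @psum_full 1 n.+1 P.
  rewrite Cc => E; suff : c = n by lia.
  rewrite E ?subn1 // => i hi; apply/negPn/negP => Pi; apply: Hn; exists i => //.
  by rewrite mem_index_iota.
have [x [Px Hx xr]] : exists x, [/\ ~~ P x, P x.+1 \/ (0 < x /\ P x.-1) & 1 <= x <= n].
  case: (ltngtP y p) => yp.
  - have [|x [h1 h2 h3]] := @adj_up P p Pp (p - y.+1) y _ Py; first lia.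
    exists x; split => //; [by left | have := R _ Pp; lia].
  - have [|x [h1 h2 h3]] := @adj_down P p Pp (y - p.+1) y _ Py; first lia.
    exists x; split => //; [right; split => //; lia | lia].
  - by move: Py; rewrite yp Pp.
have [Q [BQ HQ]] : exists Q, pblk Q /\ (forall i, P i || (i == x) -> Q i).
apply: (IH _ c.+1) => //.
- lia.
- move=> i /orP[/R //|/eqP ->]; lia.
- apply: gapok_add => //.
  + move=> a Pa ax Hl; case: Hx => [Px1|[x0 Px1]].
      have := G a x.+1 Pa Px1 ltac:(lia).
      suff : (forall l, a < l < x.+1 -> ~~ P l) by move=> h /(_ h); lia.
      move=> l /andP[h1 h2]; case: (ltngtP l x) => h3; [apply: Hl; lia | lia | by rewrite h3].
    case: (ltngtP a x.-1) => h3; last lia.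
      by move: (Hl x.-1); rewrite Px1 h3 /= => /(_ ltac:(lia)).
    lia.
  + move=> b Pb xb Hl; case: Hx => [Px1|[x0 Px1]].
      case: (ltngtP x.+1 b) => h3; last lia.
        by move: (Hl x.+1); rewrite Px1 h3 /= => /(_ ltac:(lia)).
      lia.
    have := G x.-1 b Px1 Pb ltac:(lia).
    suff : (forall l, x.-1 < l < b -> ~~ P l) by move=> h /(_ h); lia.
    move=> l /andP[h1 h2]; case: (ltngtP l x) => h3; [lia | apply: Hl; lia | by rewrite h3].
- rewrite psum_add //; first by rewrite Cc addn1.
  lia.
exists Q; split => // i Pi; apply: HQ; by rewrite Pi.
Qed.


Definition Cblk := fun i => 0 < i <= k.

Lemma chain (F : nat -> nat) (h : nat) : 0 < d -> 0 < k -> k <= n ->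
  (forall i, F i <= 1) ->
  forall P, pblk P ->
  (psum 1 n.+1 P F <= h <= psum 1 n.+1 Cblk F \/ psum 1 n.+1 Cblk F <= h <= psum 1 n.+1 P F) ->
  exists Q, pblk Q /\ psum 1 n.+1 Q F = h.
Proof.
move=> d0 k0 kn F1.
suff: forall mu P, psum 1 n.+1 P id <= mu -> pblk P ->
  (psum 1 n.+1 P F <= h <= psum 1 n.+1 Cblk F \/ psum 1 n.+1 Cblk F <= h <= psum 1 n.+1 P F) ->
  exists Q, pblk Q /\ psum 1 n.+1 Q F = h.
  by move=> H P; apply: H.
elim=> [|mu IH] P Hmu [R Ck G] Hh.
all: have [M [PM HM]] : exists M, P M /\ forall i, P i -> i <= M.
all: try (have [p [Pp _ _]] := @exists_in P 1 n.+1 ltac:(lia);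
  have exP : exists i, P i by exists p).
all: try (have ubP : forall i, P i -> i <= n by move=> i /R; lia).
all: try (by case: (ex_maxnP exP ubP) => M PM HM; exists M).
- exfalso; have Mr : 1 <= M < n.+1 by have := R _ PM; lia.
  have := @psum_rem 1 n.+1 P id M PM Mr; rewrite /=; lia.
- have Mn : M <= n by have := R _ PM; lia.
  case: (boolP (has (fun y => ~~ P y) (index_iota 1 M))) => [/hasP [y]|/hasP Hn].
    rewrite mem_index_iota => /andP[y1 yM] Py.
    have [|x [Px Px1 xr]] := @adj_up P M PM (M - y.+1) y _ Py; first lia.
    pose P' := fun i => (P i && (i != M)) || (i == x).
    have Px' : ~~ (P x && (x != M)) by rewrite (negbTE Px).
    have xr' : 1 <= x < n.+1 by lia.
    have Mr : 1 <= M < n.+1 by lia.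
    have E1 := @psum_add 1 n.+1 (fun i => P i && (i != M)) F x Px' xr'.
    have E2 := @psum_rem 1 n.+1 P F M PM Mr.
    have E3 := @psum_add 1 n.+1 (fun i => P i && (i != M)) id x Px' xr'.
    have E4 := @psum_rem 1 n.+1 P id M PM Mr.
    have E5 := @psum_add 1 n.+1 (fun i => P i && (i != M)) (fun _ => 1) x Px' xr'.
    have E6 := @psum_rem 1 n.+1 P (fun _ => 1) M PM Mr.
    have BP' : pblk P'.
      split.
      - move=> i /orP[/andP[/R //]|/eqP ->]; lia.
      - by rewrite /P' E5 -Ck -E6.
      - apply: gapok_add => //; first exact: gapok_remmax.
        + move=> a /andP[Pa aM] ax Hl.
          have := G a x.+1 Pa Px1 ltac:(lia).
          suff : (forall l, a < l < x.+1 -> ~~ P l) by move=> hh /(_ hh); lia.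
          move=> l /andP[h1 h2]; case: (ltngtP l x) => h3; last by rewrite h3.
            have := Hl l; rewrite h1 h3 /= => /(_ isT).
            have -> : l != M by apply/eqP => E; lia.
            by rewrite andbT.
          lia.
        + move=> b /andP[Pb bM] xb Hl.
          have := HM _ Pb; case: (eqVneq x.+1 M) => [E|xM].
            by move: bM; rewrite -E => /eqP ?; lia.
          case: (ltngtP x.+1 b) => h3; last lia.
            by move: (Hl x.+1); rewrite Px1 xM h3 /= => /(_ ltac:(lia)).
          lia.
    case: (eqVneq (psum 1 n.+1 P F) h) => [E|Ne]; first by exists P.
    apply: (IH P') => //.
      rewrite /P'; have := F1 x; have := F1 M; lia.
    have := F1 x; have := F1 M; rewrite /P'; lia.
  have EP : forall i, 1 <= i < n.+1 -> P i = Cblk i.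
    move=> i ir; rewrite /Cblk.
    have CM : psum 1 n.+1 P (fun _ => 1) = M.
      rewrite (@psum_eq 1 n.+1 P (fun i => 0 < i <= M)); last first.
        move=> j jr; apply/idP/idP => [Pj|/andP[j0 jM]].
          by have := HM _ Pj; have := R _ Pj; lia.
        rewrite leq_eqVlt in jM; case/orP: jM => [/eqP -> //|jM].
        apply/negPn/negP => Pj; apply: Hn; exists j => //; rewrite mem_index_iota; lia.
      rewrite (@psum_cat 1 M.+1 n.+1); last lia.
      rewrite (@psum_full 1 M.+1); last by move=> j jr; lia.
      rewrite psum_zero; first lia.
      by move=> j jr /andP[]; lia.
    move: Ck; rewrite CM => <-.
    apply/idP/idP => [Pi|/andP[i0 iM]].
      by have := HM _ Pi; have := R _ Pi; lia.
    rewrite leq_eqVlt in iM; case/orP: iM => [/eqP -> //|iM].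
    apply/negPn/negP => Pi; apply: Hn; exists i => //; rewrite mem_index_iota; lia.
  exists P; split => //.
  by move: Hh; rewrite (@psum_eq 1 n.+1 P Cblk F EP); lia.
Qed.

End Blocks.


Section Walk.
Variables (d : nat) (S : nat -> bool).
Hypothesis d0 : 0 < d.

Definition step y := y.+1 + find (fun l => S (y.+1 + l)) (iota 0 d.-1).

Lemma step_gt y : y < step y.
Proof. rewrite /step; lia. Qed.

Lemma step_le y : step y <= y + d.
Proof.
rewrite /step; have := find_size (fun l => S (y.+1 + l)) (iota 0 d.-1).
rewrite size_iota; lia.
Qed.

Lemma step_skip y l : y < l < step y -> ~~ S l.
Proof.
move=> /andP[h1 h2].
have hl : l - y.+1 < find (fun l => S (y.+1 + l)) (iota 0 d.-1) by rewrite /step in h2; lia.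
have := before_find 0 hl.
have hs := find_size (fun l => S (y.+1 + l)) (iota 0 d.-1).
rewrite size_iota in hs.
rewrite nth_iota; last lia.
by rewrite add0n (_ : y.+1 + (l - y.+1) = l) ?Bool.negb_true_iff //; lia.
Qed.

Lemma step_S y : ~~ S (step y) -> step y = y + d.
Proof.
move=> nS; have hs := find_size (fun l => S (y.+1 + l)) (iota 0 d.-1).
rewrite size_iota in hs.
case: (ltngtP (find (fun l => S (y.+1 + l)) (iota 0 d.-1)) d.-1) => h; last first.
- rewrite /step h; lia.
- lia.
- have : has (fun l => S (y.+1 + l)) (iota 0 d.-1) by rewrite has_find size_iota.
  move=> /(nth_find 0); rewrite nth_iota // add0n => hS.
  by move: nS; rewrite /step hS.
Qed.

Definition w x u := iter u step x.
Arguments w : simpl never.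

Lemma w0 x : w x 0 = x.
Proof. by []. Qed.

Lemma wS x u : w x u.+1 = step (w x u).
Proof. by []. Qed.

Lemma w_mono x u v : u < v -> w x u < w x v.
Proof.
elim: v => [|v IH] //; rewrite ltnS leq_eqVlt => /orP[/eqP ->|uv].
  by rewrite wS step_gt.
by apply: ltn_trans (IH uv) _; rewrite wS step_gt.
Qed.

Lemma w_ge x u : x <= w x u.
Proof. by case: u => [|u] //; apply: ltnW; apply: (w_mono x 0 u.+1). Qed.

Fixpoint Wp x t i := if t is t'.+1 then Wp x t' i || (i == w x t') else false.

Lemma WpP x t i : Wp x t i -> exists u, u < t /\ w x u = i.
Proof.
elim: t => [|t IH] //= /orP[/IH [u [h1 h2]]|/eqP E].
  by exists u; split => //; lia.
by exists t; rewrite E.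
Qed.

Lemma Wp_w x t u : u < t -> Wp x t (w x u).
Proof.
elim: t => [|t IH] //; rewrite ltnS leq_eqVlt => /orP[/eqP ->|ut] /=.
  by rewrite eqxx orbT.
by rewrite IH.
Qed.

Lemma Wp_gap x t : gapok d (Wp x t).
Proof.
move=> i j /WpP [u [ut <-]] /WpP [v [vt <-]] ij Hl.
have uv : u < v by case: (ltngtP u v) => // h; [have := w_mono x _ _ h | move: ij; rewrite h]; lia.
case: (ltngtP u.+1 v) => h; last by rewrite -h wS step_le.
  have := Hl (w x u.+1); rewrite (Wp_w x t u.+1) //; last lia.
  by rewrite (w_mono x _ _ (ltnSn u)) (w_mono x _ _ h) => /(_ isT).
lia.
Qed.

Lemma Wp_sum x t G n : 0 < x -> (forall u, u < t -> w x u <= n) ->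
  psum 1 n.+1 (Wp x t) G = \sum_(u < t) G (w x u).
Proof.
move=> x0; elim: t => [|t IH] H.
  by rewrite big_ord0 psum_zero.
rewrite big_ord_recr /= -IH; last by move=> u ut; apply: H; lia.
rewrite -psum_add //.
- apply/negP => /WpP [u [ut E]]; have := w_mono x _ _ ut; lia.
- have := w_ge x t; have := H t (ltnSn t); lia.
Qed.

Lemma visit x t : \sum_(u < t.+1) (S (w x u) : nat) = psum x (w x t).+1 predT (fun i => S i : nat).
Proof.
elim: t => [|t IH].
  by rewrite big_ord_recr big_ord0 psum_nat1.
rewrite big_ord_recr /= IH (@psum_cat x (w x t).+1 (w x t.+1).+1); last first.
  by have := w_ge x t; have := w_mono x _ _ (ltnSn t); lia.
rewrite (@psum_recr (w x t).+1 (w x t.+1) predT); last by have := w_mono x _ _ (ltnSn t); lia.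
rewrite (@psum_zero (w x t).+1 (w x t.+1) predT) // => i /andP[h1 h2] _.
have : ~~ S i by apply: (step_skip (w x t)); rewrite -wS; lia.
by move/negbTE ->.
Qed.

Lemma wspan x t : w x t + d.-1 * \sum_(u < t.+1) (S (w x u) : nat) >= x + d * t + d.-1 * S x.
Proof.
elim: t => [|t IH].
  by rewrite big_ord_recr big_ord0 /= w0; nia.
rewrite big_ord_recr /= mulnDr wS.
case: (boolP (S (step (w x t)))) => hS /=.
  have := step_gt (w x t); move: IH.
  set s := \sum_(_ < _) _; set b := nat_of_bool (S x); rewrite mulnS; lia.
rewrite (step_S _ hS); move: IH.
set s := \sum_(_ < _) _; set b := nat_of_bool (S x); rewrite mulnS; lia.
Qed.

End Walk.


Lemma sq_pred h : 0 < h -> h * h = (h - 1) * (h - 1) + 2 * (h - 1) + 1.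
Proof. by case: h => // h _; rewrite subn1 /= mulSn mulnS; lia. Qed.

Lemma arith d h n m q J j s1 : 0 < d -> 0 < h -> 0 < s1 -> m = J + j -> J <= q * (h - 1) ->
  j <= h - 1 -> s1 + d * (h + h) * q + j <= n + 1 + d.-1 * J -> n <= d.+1 * m ->
  d.+1 * (h * h - 1 - (~~ odd h) * (h - 1)) < 2 * n -> False.
Proof.
move=> d0 h0 s0 em HJ Hj Hs Hn Hb.
have e1 : d * (h + h) * q = d * (2 * h * q) by rewrite -mulnA; congr (_ * _); lia.
have h1 : d * (2 * h * q) <= d * (2 * J + j).
  have : d * (2 * h * q) + j <= n + d.-1 * J by lia.
  have : n <= d.+1 * J + d.+1 * j by rewrite -mulnDr -em.
  have e2 : d.+1 * J = d * J + J by rewrite mulSn addnC.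
  have e3 : d.+1 * j = d * j + j by rewrite mulSn addnC.
  have e4 : d.-1 * J + J = d * J by rewrite -mulSnr prednK.
  have e5 : d * (2 * J + j) = 2 * (d * J) + d * j by rewrite mulnDr mulnCA.
  lia.
rewrite leq_pmul2l // in h1.
have h2 : 2 * q <= j.
  have e6 : q * (h - 1) + q = q * h by clear -h0; case: h h0 => // h _; rewrite subn1 /= mulnS addnC.
  have e7 : 2 * h * q = 2 * (q * h) by rewrite -mulnA (mulnC h q).
  lia.
have hm : 2 * m <= 2 * (q * (h - 1)) + 2 * j by lia.
have hsq := sq_pred _ h0.
have fin : forall X, 2 * m <= X -> d.+1 * X < 2 * n -> False.
  move=> X hX hXn; have := leq_mul (leqnn d.+1) hX.
  rewrite mulnCA; lia.
case: (boolP (odd h)) => oh.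
  rewrite oh /= mul0n subn0 in Hb; apply: (fin _ _ Hb).
  have a1 : 2 * q * (h - 1) <= j * (h - 1) by apply: leq_mul.
  have a2 : j * (h - 1) <= (h - 1) * (h - 1) by apply: leq_mul.
  rewrite -mulnA in a1; lia.
rewrite (negbTE oh) /= mul1n in Hb; apply: (fin _ _ Hb).
have [r hr] : exists r, h = r + r.
  by exists h./2; move: (odd_double_half h); rewrite (negbTE oh) add0n -addnn.
have hq : 2 * q <= h - 2 by lia.
have a1 : 2 * q * (h - 1) <= (h - 2) * (h - 1) by apply: leq_mul.
have a3 : (h - 2) * (h - 1) + (h - 1) = (h - 1) * (h - 1).
  by rewrite addnC -mulSn; congr (_ * _); lia.
rewrite -mulnA in a1; lia.
Qed.

Lemma sv_lemma s h : s <= 1 -> 0 < h -> s = (h + h - 2) %/ 2 %[mod 2] -> s = ~~ odd h.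
Proof.
move=> s1 h0; have := odd_double_half h; case: (odd h) => /= E; lia.
Qed.
Lemma eX_lemma h : 0 < h ->
  (h + h) ^ 2 + 4 * (~~ odd h) = 2 * (~~ odd h) * (h + h) + 4 + 4 * (h * h - 1 - (~~ odd h) * (h - 1)).
Proof. move=> h0; rewrite -mulnn; case: (odd h) => /=; nia. Qed.


Lemma exists_pos a b P F : 0 < psum a b P F -> exists i, [/\ P i, 0 < F i, a <= i & i < b].
Proof.
move=> H; case: (boolP (has (fun i => P i && (0 < F i)) (index_iota a b))) => [/hasP [i]|/hasP Hn].
  by rewrite mem_index_iota => /andP[h1 h2] /andP[Pi Fi]; exists i.
exfalso; move: H; rewrite psum_zero // => i hi Pi.
case: (posnP (F i)) => // Fi; case: Hn; exists i; first by rewrite mem_index_iota.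
by rewrite Pi Fi.
Qed.

Section Core.
Variables (n d k h : nat) (S : nat -> bool).
Hypothesis d0 : 0 < d.
Hypothesis kh : k = h + h.
Hypothesis h0 : 0 < h.
Hypothesis kn : k <= n.
Let Sn := fun i => (S i : nat).
Let cnt a := psum a n.+1 predT Sn.
Hypothesis NoGood : forall Q, pblk n d k Q -> psum 1 n.+1 Q Sn < h.

Definition claim x := exists q J j, [/\ cnt x = J + j, J <= q * (h - 1), j <= h - 1 &
   x + d * k * q + j <= n + 1 + d.-1 * J].

Lemma step_claim x : 0 < x <= n -> S x -> (forall y, x < y <= n -> S y -> claim y) -> claim x.
Proof.
move=> xr Sx IH.
have [t' [tk tn tcase]] : exists t', [/\ t'.+1 <= k, w d S x t' <= n & t'.+1 = k \/ n < w d S x t'.+1].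
  case: (leqP (w d S x k.-1) n) => H.
    by exists k.-1; split => //; [lia | left; lia].
  have exP : exists u, n < w d S x u by exists k.-1.
  case: (ex_minnP exP) => u nu umin.
  have u0 : 0 < u by case: u nu {umin} => [|u] //; rewrite w0; lia.
  exists u.-1; split.
  - have := umin _ H; lia.
  - rewrite leqNgt; apply/negP => /umin; lia.
  - right; by rewrite prednK.
have hall : forall u, u < t'.+1 -> w d S x u <= n.
  move=> u; rewrite ltnS leq_eqVlt => /orP[/eqP -> //|ut].
  by have := @w_mono d S d0 x _ _ ut; lia.
have x0 : 0 < x by lia.
have Wr : forall i, Wp d S x t'.+1 i -> 0 < i <= n.
  move=> i /(@WpP d S d0) [u [ut <-]]; have := w_ge d S d0 x u; have := hall u ut; lia.
have Wc : psum 1 n.+1 (Wp d S x t'.+1) (fun _ => 1) = t'.+1.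
  by rewrite (@Wp_sum d S d0 x t'.+1 _ n x0 hall) sum_nat_const card_ord muln1.
set j := \sum_(u < t'.+1) Sn (w d S x u).
have Ws : psum 1 n.+1 (Wp d S x t'.+1) Sn = j by rewrite (@Wp_sum d S d0 x t'.+1 _ n x0 hall).
have jh : j < h.
  rewrite ltnNge; apply/negP => hj.
  have [Q [BQ WQ]] := @pad n d k _ t'.+1 d0 Wr (Wp_gap d S d0 x t'.+1) Wc (ltn0Sn _) tk kn.
  have := NoGood _ BQ; have := @psum_mono 1 n.+1 _ _ Sn WQ; lia.
have jv : j = psum x (w d S x t').+1 predT Sn by rewrite /j (@visit d S d0).
have cx : cnt x = j + cnt (w d S x t').+1.
  rewrite jv /cnt (@psum_cat x (w d S x t').+1 n.+1) //.
  by have := w_ge d S d0 x t'; lia.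
case: (posnP (cnt (w d S x t').+1)) => c0.
  exists 0, 0, j; split; [by rewrite cx c0 addn0 | lia | lia |].
  have : cnt x <= n.+1 - x by rewrite /cnt; apply: psum_le1 => i; rewrite /Sn; case: (S i).
  rewrite cx c0 !muln0 addn0; lia.
have [y0 [_ Sy0 y0a y0b]] := @exists_pos _ _ _ _ c0.
have Sy0' : S y0 by move: Sy0; rewrite /Sn; case: (S y0).
have exP : exists y, (w d S x t' < y) && S y.
  by exists y0; rewrite Sy0' andbT.
case: (ex_minnP exP) => y /andP[ya Sy] ymin.
have yn : y <= n.
  have h1 : w d S x t' < y0 by lia.
  by have := ymin y0; rewrite Sy0' andbT h1 => /(_ isT); lia.
have tk' : t'.+1 = k.
  case: tcase => // big.
  have : ~~ S y by apply: (step_skip d S d0 (w d S x t')); rewrite -wS; lia.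
  by rewrite Sy.
have cy : cnt (w d S x t').+1 = cnt y.
  rewrite /cnt (@psum_cat (w d S x t').+1 y n.+1); last lia.
  rewrite (@psum_zero (w d S x t').+1 y) // => i /andP[h1 h2] _; rewrite /Sn.
  case: (boolP (S i)) => // Si; have := ymin i; rewrite Si andbT; lia.
have wg := w_ge d S d0 x t'.
have [q [J [j' [E1 E2 E3 E4]]]] := IH y ltac:(lia) Sy.
have sp := wspan d S d0 x t'.
rewrite -/Sn -/j Sx in sp.
exists q.+1, (J + j), j'; split.
- by rewrite cx cy E1; lia.
- by rewrite mulSn; lia.
- done.
- have e1 : d * k * q.+1 = d * k * q + d * k by rewrite mulnS addnC.
  have e2 : d * k = d * t' + d by rewrite -tk' mulnS; lia.
  have e3 : d.-1 * (J + j) = d.-1 * J + d.-1 * j by rewrite mulnDr.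
  rewrite e1 e2 e3; rewrite e2 in E4; lia.
Qed.

Lemma claim_all z : 0 < z <= n -> S z -> claim z.
Proof.
suff: forall r x, n - x <= r -> 0 < x <= n -> S x -> claim x by move=> H; apply: H (leqnn _).
elim=> [|r IH] x hr xr Sx; apply: step_claim => // y yr Sy.
  lia.
apply: IH => //; lia.
Qed.

End Core.


Lemma core n d k h (S : nat -> bool) : 0 < d -> k = h + h -> 0 < h -> k <= n ->
  h <= psum 1 n.+1 predT (fun i => S i : nat) ->
  n <= d.+1 * psum 1 n.+1 predT (fun i => S i : nat) ->
  d.+1 * (h * h - 1 - (~~ odd h) * (h - 1)) < 2 * n ->
  exists Q, pblk n d k Q /\ h <= psum 1 n.+1 Q (fun i => S i : nat).
Proof.
move=> d0 kh h0 kn hm nm Hb.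
case: (classic (exists Q, pblk n d k Q /\ h <= psum 1 n.+1 Q (fun i => S i : nat))) => // H.
exfalso.
have NG : forall Q, pblk n d k Q -> psum 1 n.+1 Q (fun i => S i : nat) < h.
  move=> Q BQ; rewrite ltnNge; apply/negP => hQ; apply: H; by exists Q.
have [i0 [_ Si0 i01 i0n]] := @exists_pos 1 n.+1 predT _ (leq_trans h0 hm).
have Si0' : S i0 by move: Si0; case: (S i0).
have exP : exists i, (0 < i) && S i by exists i0; rewrite Si0' andbT; lia.
case: (ex_minnP exP) => s1 /andP[s10 Ss1] smin.
have s1n : s1 <= n by have := smin i0; rewrite Si0' andbT => /(_ ltac:(lia)); lia.
have [q [J [j [E1 E2 E3 E4]]]] := @claim_all n d k h S d0 kh h0 kn NG s1 ltac:(lia) Ss1.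
have em : psum 1 n.+1 predT (fun i => S i : nat) = J + j.
  rewrite (@psum_cat 1 s1 n.+1) ?E1; last lia.
  rewrite (@psum_zero 1 s1) // => i /andP[h1 h2] _.
  by case: (boolP (S i)) => // Si; have := smin i; rewrite Si andbT => /(_ ltac:(lia)); lia.
rewrite kh in E4.
exact: (@arith d h n _ q J j s1 d0 h0 s10 em E2 E3 E4 nm Hb).
Qed.


Lemma fsum_split n (f : nat -> int) :
  (forall i, 1 <= i <= n -> f i = 1%R \/ f i = (-1)%R) ->
  forall Q, (\sum_(1 <= i < n.+1 | Q i) f i)%R =
   ((psum 1 n.+1 Q (fun i => (f i == 1%R) : nat))%:R - (psum 1 n.+1 Q (fun i => (f i == (-1)%R) : nat))%:R)%R.
Proof.
move=> Hf Q; rewrite /psum !natr_sum -sumrB big_nat_cond [RHS]big_nat_cond.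
apply: eq_bigr => i /andP[/andP[i1 i2] _].
by case: (Hf i ltac:(lia)) => ->.
Qed.

Lemma count_split n (f : nat -> int) k Q :
  (forall i, 1 <= i <= n -> f i = 1%R \/ f i = (-1)%R) ->
  psum 1 n.+1 Q (fun _ => 1) = k ->
  psum 1 n.+1 Q (fun i => (f i == 1%R) : nat) + psum 1 n.+1 Q (fun i => (f i == (-1)%R) : nat) = k.
Proof.
move=> Hf <-; rewrite -psum_split; apply: psum_eqF => i /andP[i1 i2] _.
by case: (Hf i ltac:(lia)) => ->.
Qed.

Theorem theorem3p1 (k d n s : nat) (f : nat -> int) :
  0 < k -> ~~ odd k -> 2 <= d -> 0 < n ->
  s <= 1 -> s = (k - 2) %/ 2 %[mod 2] ->
  k <= n ->
  ((d.+1)%:R / 8%:R * ((k ^ 2)%:R - (2 * s * k)%:R + (4 * s)%:R - 4%:R) + 1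
     <= (n%:R : rat))%R ->
  (forall i, 1 <= i <= n -> f i = 1%R \/ f i = (-1)%R) ->
  ((`|fsum_n f n|)%:~R <= (n%:R - k%:R : rat))%R ->
  ((`|fsum_n f n|)%:~R <= (d%:R - 1) / (d%:R + 1) * (n%:R : rat))%R ->
  exists A : seq nat, dk_block n d k A /\ fsum f A = 0%R.
Proof.
move=> k0 ek d2 n0 s1 sm kn Hb Hf H1 H2.
set h := k./2.
have kh : k = h + h by rewrite addnn -[LHS](odd_double_half k) (negbTE ek).
have h0 : 0 < h by lia.
have d0 : 0 < d by lia.
set Fp := fun i => (f i == 1%R) : nat.
set Fm := fun i => (f i == (-1)%R) : nat.
set p := psum 1 n.+1 predT Fp.
set m := psum 1 n.+1 predT Fm.
have pm : p + m = n.
  have := @count_split n f n predT Hf; rewrite psum_full ?subSS ?subn0; last by [].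
  by move=> /(_ erefl).
have HZ : ((fsum_n f n)%:~R : rat) = (p%:R - m%:R)%R.
  have -> : fsum_n f n = (p%:R - m%:R)%R.
    rewrite -(@fsum_split n f Hf predT) /fsum_n; by apply: eq_bigl.
  by rewrite intrB !natz.
have Habs : forall X : rat, ((`|fsum_n f n|)%:~R <= X)%R ->
    (p%:R - m%:R <= X)%R /\ (m%:R - p%:R <= X)%R.
  move=> X HX; rewrite -HZ; split.
    by apply: le_trans HX; rewrite ler_int; exact: ler_norm.
  apply: le_trans HX.
  rewrite (_ : (m%:R - p%:R = (- fsum_n f n)%:~R :> rat)%R); last by rewrite mulrNz HZ opprB.
  by rewrite ler_int -normrN; exact: ler_norm.
have epm : (p%:R + m%:R = n%:R :> rat)%R by rewrite -natrD pm.
have [a1 a2] := Habs _ H1.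
have hm : h <= m.
  have : (k%:R <= (m + m)%:R :> rat)%R by rewrite natrD; lra.
  rewrite ler_nat; lia.
have hp : h <= p.
  have : (k%:R <= (p + p)%:R :> rat)%R by rewrite natrD; lra.
  rewrite ler_nat; lia.
have [b1 b2] := Habs _ H2.
have D0 : (0 <= d%:R :> rat)%R by rewrite ler0n.
have Dp : (0 < d%:R + 1 :> rat)%R by lra.
have e : ((d%:R - 1) / (d%:R + 1) * n%:R * (d%:R + 1) = (d%:R - 1) * n%:R :> rat)%R.
  by field; rewrite lt0r_neq0.
have nmm : n <= d.+1 * m.
  have c1 : ((p%:R - m%:R) * (d%:R + 1) <= (d%:R - 1) * n%:R :> rat)%R.
    by rewrite -e; apply: ler_wpM2r => //; lra.
  have : (n%:R <= (d.+1 * m)%:R :> rat)%R.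
    rewrite natrM -addn1 natrD; rewrite -epm in c1 *; lra.
  by rewrite ler_nat.
have npp : n <= d.+1 * p.
  have c1 : ((m%:R - p%:R) * (d%:R + 1) <= (d%:R - 1) * n%:R :> rat)%R.
    by rewrite -e; apply: ler_wpM2r => //; lra.
  have : (n%:R <= (d.+1 * p)%:R :> rat)%R.
    rewrite natrM -addn1 natrD; rewrite -epm in c1 *; lra.
  by rewrite ler_nat.
have sv : s = ~~ odd h by apply: sv_lemma => //; rewrite -kh.
set X := h * h - 1 - (~~ odd h) * (h - 1).
have eX : k ^ 2 + 4 * s = 2 * s * k + 4 + 4 * X by rewrite sv kh; exact: eX_lemma.
have eR : ((k ^ 2)%:R - (2 * s * k)%:R + (4 * s)%:R - 4%:R = 4%:R * X%:R :> rat)%R.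
  move/(congr1 (fun x : nat => (x%:R : rat))): eX; rewrite !natrD natrM; lra.
rewrite eR in Hb.
have Hbound : d.+1 * X < 2 * n.
  have e2 : (d.+1%:R / 8%:R * (4%:R * X%:R) = (d.+1 * X)%:R / 2%:R :> rat)%R.
    by rewrite natrM; field.
  rewrite e2 in Hb.
  have : ((d.+1 * X)%:R < (2 * n)%:R :> rat)%R by rewrite natrM; lra.
  by rewrite ltr_nat.
have [Qm [BQm HQm]] := @core n d k h (fun i => f i == (-1)%R) d0 kh h0 kn hm nmm Hbound.
have [Qp [BQp HQp]] := @core n d k h (fun i => f i == 1%R) d0 kh h0 kn hp npp Hbound.
have HQm' : h <= psum 1 n.+1 Qm Fm := HQm.
have HQp' : h <= psum 1 n.+1 Qp Fp := HQp.
have F1 : forall i, Fp i <= 1 by move=> i; rewrite /Fp; case: (f i == 1%R).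
have Hch : forall P, pblk n d k P -> psum 1 n.+1 P Fp + psum 1 n.+1 P Fm = k.
  by move=> P [_ C _]; apply: count_split.
have [Q [BQ HQ]] : exists Q, pblk n d k Q /\ psum 1 n.+1 Q Fp = h.
  case: (leqP h (psum 1 n.+1 (Cblk k) Fp)) => hc.
    apply: (@chain n d k Fp h d0 k0 kn F1 Qm BQm); left; rewrite hc andbT.
    have := Hch _ BQm; move: HQm'.
    set a := psum _ _ Qm Fp; set b := psum _ _ Qm Fm => hb hab.
    by rewrite -(leq_add2r b) hab kh leq_add2l.
  apply: (@chain n d k Fp h d0 k0 kn F1 Qp BQp); right; rewrite HQp' andbT; exact: ltnW.
exists (filter Q (iota 1 n)); split; first exact: pblock_dk.
have := Hch _ BQ; rewrite HQ => HQf.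
rewrite /fsum big_filter (_ : iota 1 n = index_iota 1 n.+1); last by rewrite /index_iota subn1.
rewrite (@fsum_split n f Hf Q) -/Fp -/Fm HQ (_ : psum 1 n.+1 Q Fm = h); last lia.
by rewrite subrr.
Qed.
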